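(* Let $\mathbb{F}\in\{\mathbb{R},\mathbb{C}\}$, let $N\ge2$, $M\ge 2$ and $Q$ be integers with $1\le Q\le M-1$, write $\mathcal{M}=\{1,\dots,M\}$, let $0\le\epsilon\le1$, and let $\mathbf{H}_1,\dots,\mathbf{H}_M$ be $N\times N$ positive semidefinite matrices (real symmetric if $\mathbb{F}=\mathbb{R}$, Hermitian if $\mathbb{F}=\mathbb{C}$). Let $(\bar{\boldsymbol\beta},\bar{\mathbf{X}}^{(2)})$ be an optimal solution of the problem (SDP2): minimize $\mathrm{Tr}[\mathbf{X}^{(2)}]$ over $\boldsymbol\beta\in\mathbb{R}^M$ and $N\times N$ matrices $\mathbf{X}^{(2)}\succeq0$ (real symmetric if $\mathbb{F}=\mathbb{R}$, Hermitian if $\mathbb{F}=\mathbb{C}$) subject to $\mathrm{Tr}[\mathbf{H}_i\mathbf{X}^{(2)}]\ge\beta_i+(1-\beta_i)\epsilon$ for $i\in\mathcal{M}$, $\sum_{i\in\mathcal{M}}\beta_i=Q$, $0\le\beta_i\le1$ for $i\in\mathcal{M}$. Let $\bar{\boldsymbol\beta}_{[Q]}$ be the $Q$-th largest entry of $\bar{\boldsymbol\beta}$ and $\mathcal{I}=\{i\in\mathcal{M}:\bar{\boldsymbol\beta}[i]\ge\bar{\boldsymbol\beta}_{[Q]}\}$. Then $\bar{\boldsymbol\beta}[i]\ge\frac{1}{M-Q+1}$ for all $i\in\mathcal{I}$.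
   Context: $\bar{\boldsymbol\beta}[i]$ denotes the $i$-th entry of $\bar{\boldsymbol\beta}$. *)

(* Defs.v *)
From HB Require Import structures.
From mathcomp Require Import all_boot all_order all_algebra.
From mathcomp Require Import reals.
From mathcomp.real_closed Require Import complex.
Set Implicit Arguments. Unset Strict Implicit. Unset Printing Implicit Defensive.
Import Order.TTheory GRing.Theory Num.Theory.
Local Open Scope ring_scope.

(* Generic definitions over a scalar field F (F = R or F = R[i]) with a
   conjugation cj (id for R, conjc for R[i]) and the embedding emb : R -> F
   of the reals (id for R, x |-> x%:C for R[i]). *)
Section SDP2.
Context {R : realFieldType} {F : numDomainType} (cj : F -> F) (emb : R -> F).

Definition psdF (n : nat) (A : 'M[F]_n) : Prop :=
  A^T = map_mx cj A /\
  forall v : 'rV[F]_n, 0 <= (v *m A *m (map_mx cj v)^T) 0 0.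

Definition sdp2_feasible (N M Q : nat) (eps : R) (H : 'I_M -> 'M[F]_N)
    (beta : 'I_M -> R) (X : 'M[F]_N) : Prop :=
  [/\ psdF X,
      (forall i, emb (beta i + (1 - beta i) * eps) <= \tr (H i *m X)),
      \sum_(i < M) beta i = Q%:R &
      (forall i, 0 <= beta i <= 1)].

Definition sdp2_optimal (N M Q : nat) (eps : R) (H : 'I_M -> 'M[F]_N)
    (beta : 'I_M -> R) (X : 'M[F]_N) : Prop :=
  sdp2_feasible Q eps H beta X /\
  forall beta' X', sdp2_feasible Q eps H beta' X' -> \tr X <= \tr X'.
End SDP2.

(* beta_[k] : the k-th largest entry (k >= 1) of beta, counted with multiplicity *)
Definition kth_largest {R : realFieldType} (M : nat) (beta : 'I_M -> R) (k : nat) : R :=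
  nth 0 (sort >=%R [seq beta i | i <- enum 'I_M]) k.-1.

(* Main.v *)
Require Import Defs.
From HB Require Import structures.
From mathcomp Require Import all_boot all_order all_algebra.
From mathcomp Require Import reals.
From mathcomp.real_closed Require Import complex.
Import Order.TTheory GRing.Theory Num.Theory.
Local Open Scope ring_scope.
From mathcomp Require Import zify lra.
Lemma kth_bound (R : realFieldType) (M Q : nat) (beta : 'I_M -> R) :
  (1 <= Q <= M - 1)%N -> (forall i, 0 <= beta i <= 1) ->
  \sum_(i < M) beta i = Q%:R ->
  1 / (M - Q + 1)%:R <= nth 0 (sort >=%R [seq beta i | i <- enum 'I_M]) Q.-1.
Proof.
move=> /andP[Q1 QM] hb hs.
set s := sort _ _.
have sz : size s = M by rewrite size_sort size_map size_enum_ord.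
have mem01 : forall k, (k < M)%N -> 0 <= nth 0 s k <= 1.
  move=> k kM; have : nth 0 s k \in s by rewrite mem_nth // sz.
  by rewrite mem_sort => /mapP[j _ ->].
have srt : sorted >=%R s.
  apply: sort_sorted => x y; exact: le_total.
set x := nth 0 s Q.-1.
have le_x : forall k, (Q.-1 <= k < M)%N -> nth 0 s k <= x.
  move=> k /andP[k1 k2].
  have := sorted_leq_nth (@ge_trans _ R) (@lexx _ R) 0 srt.
  move=> /(_ Q.-1 k); rewrite !inE sz => h; apply: h => //.
  by apply: leq_ltn_trans k1 k2.
have sumS : \sum_(0 <= k < M) nth 0 s k = Q%:R.
  have : \sum_(y <- s) y = Q%:R.
    by rewrite -hs (perm_big _ (permEl (perm_sort _ _))) big_map big_enum.
  by rewrite (big_nth 0) sz.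
rewrite (big_cat_nat (n := Q.-1)) //= in sumS; last first.
  by apply: leq_trans (leq_pred _) _; apply: leq_trans QM (leq_subr _ _).
have s1 : \sum_(0 <= k < Q.-1) nth 0 s k <= Q.-1%:R.
  apply: (@le_trans _ _ (\sum_(0 <= k < Q.-1) (1:R))); last first.
    by rewrite sumr_const_nat subn0.
  apply: ler_sum_nat => k /andP[_ kq].
  have kM : (k < M)%N.
    apply: leq_trans kq _; apply: leq_trans (leq_pred _) _; apply: leq_trans QM (leq_subr _ _).
  by case/andP: (mem01 k kM).
have s2 : \sum_(Q.-1 <= k < M) nth 0 s k <= (M - Q.-1)%:R * x.
  apply: (@le_trans _ _ (\sum_(Q.-1 <= k < M) x)); last first.
    by rewrite sumr_const_nat mulr_natl.
  by apply: ler_sum_nat => k /le_x.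
have eM : (M - Q.-1 = M - Q + 1)%N.
  have : (Q <= M)%N by apply: leq_trans QM (leq_subr _ _).
  move: Q1; clear; lia.
rewrite eM in s2.
have n0 : 0 < (M - Q + 1)%:R :> R by rewrite ltr0n addn1.
rewrite ler_pdivrMr //.
have eQ : Q%:R = Q.-1%:R + 1 :> R by rewrite natr1 prednK.
rewrite mulrC; move: sumS s1 s2; rewrite eQ.
move: (\sum_(_ <= _ < _ ) _) (\sum_(_ <= _ < _ ) _) => a b.
move=> h1 h2 h3. 
have h4 : 1 <= a by move: h1 h2; clear; lra.
by apply: le_trans h4 h3.
Qed.

Theorem lemma2p3 (R : realType) (N M Q : nat) (eps : R) :
  (2 <= N)%N -> (2 <= M)%N -> (1 <= Q <= M - 1)%N -> 0 <= eps <= 1 ->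
  (* case F = R *)
  (forall (H : 'I_M -> 'M[R]_N) (beta : 'I_M -> R) (X : 'M[R]_N),
     (forall i, psdF id (H i)) ->
     sdp2_optimal id id Q eps H beta X ->
     forall i, kth_largest beta Q <= beta i ->
       1 / (M - Q + 1)%:R <= beta i) /\
  (* case F = C *)
  (forall (H : 'I_M -> 'M[R[i]]_N) (beta : 'I_M -> R) (X : 'M[R[i]]_N),
     (forall i, psdF (@conjc R) (H i)) ->
     sdp2_optimal (@conjc R) (real_complex R) Q eps H beta X ->
     forall i, kth_largest beta Q <= beta i ->
       1 / (M - Q + 1)%:R <= beta i).
Proof.
move=> _ _ hQ _; split.
- move=> H beta X _ [[_ _ hs hb] _] i hi.
  apply: le_trans hi; exact: kth_bound.
- move=> H beta X _ [[_ _ hs hb] _] i hi.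
  apply: le_trans hi; exact: kth_bound.
Qed.
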